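(* There are 3-SAT formulas $f,f'$ such that their literal-clause graphs are isomorphic, but $f$ is satisfiable and $f'$ is not.
   Context: A 3-SAT formula is a CNF formula (a set of clauses, each a set of at most 3 literals). The literal-clause graph of a CNF formula on variables $x_1,\dots,x_n$ is the unlabeled bipartite graph with the $2n$ literals $x_i,\neg x_i$ on one side, one vertex per clause on the other side, and an edge between literal $\ell$ and clause $c$ iff $\ell\in c$ (no edges between a literal and its negation). *)

(* Defs.v *)
From mathcomp Require Import all_boot.
Set Implicit Arguments. Unset Strict Implicit. Unset Printing Implicit Defensive.

(* Literals over variables x_0..x_{n-1}: (i, true) is x_i, (i, false) is ~ x_i. *)
Definition lit (n : nat) : finType := ('I_n * bool)%type.

Definition cnf (n : nat) := {set {set lit n}}.

Definition is_3sat (n : nat) (f : cnf n) : Prop :=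
  forall c, c \in f -> #|c| <= 3.

Definition satisfiable (n : nat) (f : cnf n) : Prop :=
  exists a : 'I_n -> bool, forall c, c \in f -> exists2 l, l \in c & a l.1 == l.2.

(* Isomorphism of literal-clause graphs (unlabeled bipartite graphs: literal
   vertices on one side, one vertex per clause on the other, edge l -- c iff
   l \in c).  The negation pairing of literals is NOT required to be
   preserved (the graph is unlabeled). *)
Definition lc_graph_iso (n n' : nat) (f : cnf n) (f' : cnf n') : Prop :=
  exists (g : lit n -> lit n') (h : {set lit n} -> {set lit n'}),
    [/\ bijective g,
        {in f &, injective h},
        h @: f = f' &
        forall (l : lit n) (c : {set lit n}), c \in f -> (l \in c) = (g l \in h c)].

(* Main.v *)
Require Import Defs.
From mathcomp Require Import all_boot.

Definition x0 : lit 2 := (ord0, true).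
Definition nx0 : lit 2 := (ord0, false).
Definition x1 : lit 2 := (ord_max, true).

Definition gg (l : lit 2) : lit 2 :=
  if l == x1 then nx0 else if l == nx0 then x1 else l.

Lemma gg_inv : cancel gg gg.
Proof. by case=> [[[|[|i]] Hi] [|]] //=; rewrite /gg /=; apply/eqP; rewrite /= /x1 /nx0; try (apply/eqP; congr pair; apply/val_inj). Qed.

Lemma sat3 (A B : lit 2) : is_3sat [set [set A]; [set B]].
Proof. by move=> c /set2P [] ->; rewrite cards1. Qed.

Theorem lemma3 :
  exists (n n' : nat) (f : cnf n) (f' : cnf n'),
    [/\ is_3sat f, is_3sat f', lc_graph_iso f f', satisfiable f & ~ satisfiable f'].
Proof.
exists 2, 2, [set [set x0]; [set x1]], [set [set x0]; [set nx0]].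
split; try apply: sat3.
- exists gg, (fun c : {set lit 2} => gg @: c); split.
  + by exists gg; apply: gg_inv.
  + by move=> c d _ _; apply: imset_inj; apply: can_inj gg_inv.
  + by rewrite imsetU1 imset_set1 !imset_set1.
  + by move=> l c _; rewrite mem_imset //; apply: can_inj gg_inv.
- exists (fun _ => true) => c /set2P [] -> .
  + by exists x0; rewrite ?set11.
  + by exists x1; rewrite ?set11.
- case=> a H.
  have [l /set1P -> /eqP E1] := H [set x0] (set21 _ _).
  have [l' /set1P -> /eqP E2] := H [set nx0] (set22 _ _).
  by move: E1 E2; rewrite /= => ->.
Qed.
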